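(* Let $\xi(0),\xi(1),\xi(2),\dots$ be a sequence of vectors $\xi(k)=(\xi_1(k),\dots,\xi_d(k))\in\mathbb{R}^d$. For $\nu\geq 1$, $n\geq 1$ and $1\leq i_1,\dots,i_\nu\leq d$ define the iterated sum \[ \Sigma^{i_1,\dots,i_\nu}(n)=\sum_{0\leq k_1<\dots<k_\nu<n}\xi_{i_1}(k_1)\xi_{i_2}(k_2)\cdots\xi_{i_\nu}(k_\nu). \] Suppose that \[ \limsup_{n\to\infty} n^{-1}\sum_{k=0}^n|\xi(k)|=R<\infty \] and that the limit \[ \lim_{n\to\infty}n^{-1}\sum_{k=0}^n\xi(k)=Q=(Q_1,\dots,Q_d) \] exists with $|Q|<\infty$. Then for any $\nu\geq1$ and any $1\leq i_1,\dots,i_\nu\leq d$, \[ \lim_{n\to\infty}n^{-\nu}\Sigma^{i_1,\dots,i_\nu}(n)=\frac 1{\nu !}\prod_{j=1}^\nu Q_{i_j}. \]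
   Context: $|\cdot|$ denotes the Euclidean norm on $\mathbb{R}^d$. *)

(* Defs.v *)
From HB Require Import structures.
From mathcomp Require Import all_boot all_order all_algebra.
From mathcomp Require Import all_classical all_reals all_analysis.
Set Implicit Arguments. Unset Strict Implicit. Unset Printing Implicit Defensive.
Import Order.TTheory GRing.Theory Num.Theory.
Local Open Scope ring_scope.

Definition eucl_norm (R : realType) (d : nat) (x : 'rV[R]_d) : R :=
  Num.sqrt (\sum_(i < d) x ord0 i ^+ 2).

Definition iter_sum (R : realType) (d nu : nat) (xi : nat -> 'rV[R]_d)
    (s : nu.-tuple 'I_d) (n : nat) : R :=
  \sum_(t : nu.-tuple 'I_n | sorted ltn (map val t))
     \prod_(j < nu) xi (val (tnth t j)) ord0 (tnth s j).

(* Main.v *)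
Require Import Defs.
From HB Require Import structures.
From mathcomp Require Import all_boot all_order all_algebra.
From mathcomp Require Import all_classical all_reals all_analysis.
From mathcomp Require Import ring lra.
Import Order.TTheory GRing.Theory Num.Theory numFieldNormedType.Exports.
Local Open Scope classical_set_scope.
Local Open Scope ring_scope.



Fixpoint Bsum {R : comNzRingType} (g : nat -> nat -> R) (nu n : nat) : R :=
  match nu with
  | 0 => 1
  | nu'.+1 => \sum_(0 <= x < n) Bsum g nu' x * g nu' x
  end.

Lemma sum_tuple_rcons {R : comNzRingType} (T : finType) (nu : nat)
  (F : nu.+1.-tuple T -> R) :
  \sum_(t : nu.+1.-tuple T) F t =
  \sum_(x : T) \sum_(t : nu.-tuple T) F [tuple of rcons t x].
Proof.
rewrite (reindex (fun p : nu.-tuple T * T => [tuple of rcons p.1 p.2])) /=.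
  rewrite -(pair_bigA _ (fun (t : nu.-tuple T) (x : T) => F [tuple of rcons t x])) /=.
  by rewrite exchange_big.
exists (fun t : nu.+1.-tuple T =>
   ([tuple of belast (thead t) (behead_tuple t)], last (thead t) (behead_tuple t))).
  move=> [t x] _ /=.
  have := lastI (thead [tuple of rcons t x]) (behead [tuple of rcons t x]).
  have -> : thead [tuple of rcons t x] :: behead [tuple of rcons t x] = rcons t x.
    by symmetry; exact: (congr1 val (tuple_eta [tuple of rcons t x])).
  move=> /rcons_inj [E1 E2].
  congr pair; last by [].
  by apply: val_inj => /=; rewrite -E1.
move=> t _; apply: val_inj => /=.
by rewrite -lastI [in RHS](tuple_eta t).
Qed.

Lemma comb_Bsum {R : comNzRingType} (g : nat -> nat -> R) (nu : nat) :
  forall N n, (n <= N)%N ->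
  \sum_(t : nu.-tuple 'I_N | sorted ltn (map val t) && all (fun k => k < n)%N (map val t))
     \prod_(j < nu) g j (val (tnth t j)) = Bsum g nu n.
Proof.
elim: nu => [|nu IH] N n nN /=.
  rewrite (big_pred1 [tuple]) ?big_ord0 // => t.
  by rewrite tuple0 /= eqxx.
rewrite big_mkcond sum_tuple_rcons /=.
rewrite big_mkord (big_ord_widen N (fun x => Bsum g nu x * g nu x)) //.
rewrite [RHS]big_mkcond /=.
apply: eq_bigr => x _.
rewrite -big_mkcond /=.
case: ifP => xn.
  rewrite -(IH N x) ?(leq_trans (ltnW xn)) // big_distrl /=.
  apply: eq_big => t.
    rewrite map_rcons all_rcons sorted_pairwise; last exact: ltn_trans.
    rewrite pairwise_rcons -sorted_pairwise; last exact: ltn_trans.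
    rewrite xn /=.
    case: (sorted _ _); rewrite ?andbF ?andbT //.
    rewrite !all_map; apply/andP/allP.
      by move=> [/allP H _].
    move=> H; split; apply/allP => y /H //= yx.
    exact: ltn_trans yx xn.
  move=> _; rewrite big_ord_recr /=; congr (_ * _).
    apply: eq_bigr => j _; congr (g _ (val _)).
    by rewrite (tnth_nth (tnth t j)) /= nth_rcons size_tuple ltn_ord -tnth_nth.
  by rewrite (tnth_nth x) /= nth_rcons size_tuple ltnn eqxx.
apply: big1 => t.
by rewrite map_rcons all_rcons /= xn andbF.
Qed.


Lemma tail_bound {R : realFieldType} (z w : nat -> R) (eps : R) (K n : nat) :
  0 <= eps -> (forall j, 0 <= w j) ->
  (forall j, (K <= j)%N -> `|z j| <= eps * w j) ->
  `|\sum_(0 <= j < n) z j| <= \sum_(0 <= j < K) `|z j| + eps * \sum_(0 <= j < n) w j.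
Proof.
move=> e0 w0 hz.
apply: (le_trans (ler_norm_sum _ _ _)).
have step : \sum_(0 <= j < n) `|z j| <=
   \sum_(0 <= j < n) ((if (j < K)%N then `|z j| else 0) + eps * w j).
  apply: ler_sum => j _; case: ifP => jK.
    by rewrite lerDl mulr_ge0.
  by rewrite add0r hz // leqNgt jK.
apply: (le_trans step); rewrite big_split /= -mulr_sumr lerD2r.
rewrite -big_mkcond /=.
rewrite (big_nat_widen 0 K (n + K) xpredT) ?leq_addl //=.
rewrite (big_cat_nat _ (leq_addr K n)) //= lerDl.
by apply: sumr_ge0 => j _.
Qed.

Lemma abel_sum {R : comNzRingType} (f e : nat -> R) (n : nat) :
  \sum_(0 <= x < n) f x * e x =
  f n * \sum_(0 <= k < n) e k
  - \sum_(0 <= j < n) (f j.+1 - f j) * \sum_(0 <= k < j.+1) e k.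
Proof.
elim: n => [|n IH]; first by rewrite !big_geq // mulr0 subr0.
rewrite !big_nat_recr //= IH.
set A := \sum_(0 <= k < n) e k.
set B := \sum_(0 <= j < n) _.
ring.
Qed.

Lemma pow_diff_bounds {R : realFieldType} (y : R) (nu : nat) : 0 <= y ->
  nu.+1%:R * y ^+ nu <= (y + 1) ^+ nu.+1 - y ^+ nu.+1 <=
  nu.+1%:R * (y + 1) ^+ nu.
Proof.
move=> y0; rewrite subrXX.
have -> : y + 1 - y = 1 by ring.
rewrite mul1r /=.
have y1 : 0 <= y + 1 by lra.
apply/andP; split.
  have -> : nu.+1%:R * y ^+ nu = \sum_(i < nu.+1) y ^+ nu.
    by rewrite sumr_const card_ord mulr_natl.
  apply: ler_sum => i _.
  have hi : ((nu - i) + i = nu)%N by rewrite subnK // -ltnS.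
  rewrite -[X in _ ^+ X <= _]hi exprD; apply: ler_wpM2r; first exact: exprn_ge0.
  apply: lerXn2r; rewrite ?nnegrE //; lra.
have -> : nu.+1%:R * (y + 1) ^+ nu = \sum_(i < nu.+1) (y + 1) ^+ nu.
  by rewrite sumr_const card_ord mulr_natl.
apply: ler_sum => i _.
have hi : ((nu - i) + i = nu)%N by rewrite subnK // -ltnS.
rewrite -[X in _ <= _ ^+ X]hi exprD; apply: ler_wpM2l; first exact: exprn_ge0.
apply: lerXn2r; rewrite ?nnegrE //; lra.
Qed.

Lemma powsum_bounds {R : realFieldType} (nu n : nat) :
  nu.+1%:R * \sum_(0 <= x < n) (x%:R : R) ^+ nu <= n%:R ^+ nu.+1 <=
  nu.+1%:R * (\sum_(0 <= x < n) (x%:R : R) ^+ nu + n%:R ^+ nu).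
Proof.
have tel : (n%:R : R) ^+ nu.+1 =
    \sum_(0 <= x < n) ((x.+1%:R : R) ^+ nu.+1 - x%:R ^+ nu.+1).
  by rewrite (telescope_sumr (fun x => (x%:R : R) ^+ nu.+1)) // expr0n subr0.
rewrite tel mulr_sumr; apply/andP; split.
  apply: ler_sum => x _; rewrite -(natr1 x).
  by case/andP: (pow_diff_bounds _ nu (ler0n R x)).
apply: (@le_trans _ _ (\sum_(0 <= x < n) nu.+1%:R * (x.+1%:R : R) ^+ nu)).
  apply: ler_sum => x _; rewrite -(natr1 x).
  by case/andP: (pow_diff_bounds _ nu (ler0n R x)).
rewrite -mulr_sumr ler_wpM2l //.
have : \sum_(0 <= x < n.+1) (x%:R : R) ^+ nu =
       0%:R ^+ nu + \sum_(0 <= x < n) (x.+1%:R : R) ^+ nu by rewrite big_nat_recl.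
rewrite big_nat_recr //= => E.
have h0 : 0 <= (0%:R : R) ^+ nu by rewrite exprn_ge0.
lra.
Qed.

Lemma abel2 {R : comNzRingType} (f a : nat -> R) (q : R) (n : nat) :
  \sum_(0 <= x < n) f x * a x =
  f n * (\sum_(0 <= k < n) a k - q * n%:R)
  - \sum_(0 <= j < n) (f j.+1 - f j) * (\sum_(0 <= k < j.+1) a k - q * j.+1%:R)
  + q * \sum_(0 <= x < n) f x.
Proof.
elim: n => [|n IH]; first by rewrite !big_geq //=; ring.
rewrite !big_nat_recr //= IH -addn1 natrD.
set A := \sum_(0 <= k < n) a k.
set B := \sum_(0 <= j < n) _.
set C := \sum_(0 <= x < n) f x.
ring.
Qed.

Lemma aux_mulX {R : realFieldType} (a b X : R) : 0 <= b -> 1 <= X -> 0 <= a ->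
  a * X + b <= (a + b) * X.
Proof. move=> *; nra. Qed.

Lemma aux_abs {R : realFieldType} (P V X : R) : P <= V -> V <= P + X -> `|P - V| <= X.
Proof. by move=> h1 h2; rewrite ler_norml; apply/andP; split; lra. Qed.

Lemma aux_comb {R : realFieldType} {x1 x2 x3 x4 cq X c C1 C2 eps Y W M h : R} :
 x1 <= cq * X -> x2 <= c * (eps * Y) -> x3 <= c * (C1 + eps * Y) -> x4 <= C2 + eps * W ->
 cq * X + c * C1 + C2 <= h * Y -> eps * (2 * c + M) * Y <= h * Y ->
 eps * (2 * c + M) * Y = c * (eps * Y) + c * (eps * Y) + eps * W ->
 x1 + x2 + x3 + x4 <= h * Y + h * Y.
Proof. move=> *; lra. Qed.

Definition smallo {R : realFieldType} (T : nat -> R) (p : nat) :=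
  forall e, 0 < e -> exists N, forall n, (N <= n)%N -> `|T n| <= e * n%:R ^+ p.

Lemma step_lemma {R : archiRealFieldType} (a b : nat -> R) (q c M : R) (nu N0 : nat) :
  smallo (fun n => \sum_(0 <= k < n) a k - q * n%:R) 1 ->
  (forall n, (N0 <= n)%N -> \sum_(0 <= k < n) `|a k| <= M * n%:R) ->
  smallo (fun n => b n - c * n%:R ^+ nu) nu ->
  smallo (fun n => \sum_(0 <= x < n) b x * a x - c * q / nu.+1%:R * n%:R ^+ nu.+1) nu.+1.
Proof.
move=> Ha Hb Hc e e0.
have M0 : 0 <= M.
  have := Hb N0.+1 (leqnSn _).
  have : 0 <= \sum_(0 <= k < N0.+1) `|a k| by apply: sumr_ge0 => k _.
  move=> h1 h2; have : 0 <= M * N0.+1%:R by apply: le_trans h2.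
  by rewrite pmulr_lge0 // ltr0Sn.
set D := 2 * `|c| + M + 1.
have D0 : 0 < D by rewrite /D; have := normr_ge0 c; lra.
set eps := e / (2 * D).
have eps0 : 0 < eps by rewrite /eps divr_gt0 // mulr_gt0.
have epsD : eps * D = e / 2.
  by rewrite /eps; field; rewrite gt_eqF.
set T := fun m => \sum_(0 <= k < m) a k - q * m%:R.
set r := fun x => b x - c * x%:R ^+ nu.
set Df := fun j => (j.+1%:R : R) ^+ nu - j%:R ^+ nu.
have Df0 : forall j, 0 <= Df j.
  by move=> j; rewrite /Df subr_ge0 lerXn2r ?nnegrE ?ler0n // ler_nat.
have [N1 HN1] := Ha eps eps0.
have [N2 HN2] := Hc eps eps0.
set C1 := \sum_(0 <= j < N1) `|Df j * T j.+1|.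
set C2 := \sum_(0 <= x < N2) `|r x * a x|.
have C10 : 0 <= C1 by apply: sumr_ge0.
have C20 : 0 <= C2 by apply: sumr_ge0.
set K := 2 * (`|c * q| + `|c| * C1 + C2) / e.
have K0 : 0 <= K by rewrite /K divr_ge0 ?(ltW e0) // mulr_ge0 // !addr_ge0 // mulr_ge0.
exists (maxn (maxn N0 N1) (maxn 1 (Num.Def.archi_bound K))) => n.
rewrite !geq_max => /andP[/andP[nN0 nN1] /andP[n1 nK]].
set nn : R := n%:R.
set X : R := nn ^+ nu.
have nn1 : 1 <= nn by rewrite /nn ler1n.
have X1 : 1 <= X by rewrite /X exprn_ege1.
have nnK : K <= nn.
  apply: ltW; apply: (lt_le_trans (archi_boundP K0)); by rewrite ler_nat.
have decomp : \sum_(0 <= x < n) b x * a x - c * q / nu.+1%:R * nn ^+ nu.+1 =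
   c * q * (\sum_(0 <= x < n) (x%:R : R) ^+ nu - nn ^+ nu.+1 / nu.+1%:R)
   + c * X * T n - c * \sum_(0 <= j < n) Df j * T j.+1
   + \sum_(0 <= x < n) r x * a x.
  have -> : \sum_(0 <= x < n) b x * a x =
     c * \sum_(0 <= x < n) (x%:R : R) ^+ nu * a x + \sum_(0 <= x < n) r x * a x.
    rewrite mulr_sumr -big_split /=; apply: eq_bigr => x _; rewrite /r; ring.
  rewrite (abel2 (fun x => (x%:R : R) ^+ nu) a q n) /=.
  rewrite /X /T /Df /nn; ring.
rewrite decomp.
have [Pl Pu] : nu.+1%:R * \sum_(0 <= x < n) (x%:R : R) ^+ nu <= nn ^+ nu.+1 /\
   nn ^+ nu.+1 <= nu.+1%:R * (\sum_(0 <= x < n) (x%:R : R) ^+ nu + X).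
  by apply/andP; exact: powsum_bounds.
have bP : `|\sum_(0 <= x < n) (x%:R : R) ^+ nu - nn ^+ nu.+1 / nu.+1%:R| <= X.
  set P := \sum_(0 <= x < n) _ in Pl Pu *.
  set V := nn ^+ nu.+1 / nu.+1%:R.
  have hV : nn ^+ nu.+1 = nu.+1%:R * V by rewrite /V mulrC divfK // pnatr_eq0.
  rewrite hV in Pl Pu.
  have h1 : 0 < (nu.+1%:R : R) by rewrite ltr0Sn.
  have : P <= V by rewrite -(ler_pM2l h1).
  have : V <= P + X by rewrite -(ler_pM2l h1).
  by move=> h2 h3; apply: aux_abs.
have bT : `|T n| <= eps * nn.
  by have := HN1 n nN1; rewrite expr1.
have sumDf : \sum_(0 <= j < n) Df j * j.+1%:R <= nn * X.
  apply: (@le_trans _ _ (\sum_(0 <= j < n) Df j * nn)).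
    rewrite big_nat_cond [X in _ <= X]big_nat_cond.
    apply: ler_sum => j /andP[/andP[_ jn] _]; apply: ler_wpM2l => //.
    by rewrite /nn ler_nat.
  rewrite -mulr_suml /Df (telescope_sumr (fun j => (j%:R : R) ^+ nu)) //.
  rewrite mulrC ler_wpM2l ?ler0n // gerBl exprn_ge0 //.
have bDT : `|\sum_(0 <= j < n) Df j * T j.+1| <= C1 + eps * (nn * X).
  have hz : forall j, (N1 <= j)%N -> `|Df j * T j.+1| <= eps * (Df j * j.+1%:R).
    move=> j jN; rewrite normrM ger0_norm // mulrCA ler_wpM2l //.
    by have := HN1 j.+1 (leq_trans jN (leqnSn _)); rewrite expr1.
  have hw : forall j, 0 <= Df j * j.+1%:R by move=> j; rewrite mulr_ge0.
  apply: (le_trans (@tail_bound _ (fun j => Df j * T j.+1) (fun j => Df j * j.+1%:R) eps N1 n (ltW eps0) hw hz)).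
  by rewrite lerD2l ler_wpM2l // ltW.
have sumA : \sum_(0 <= x < n) (x%:R : R) ^+ nu * `|a x| <= X * (M * nn).
  apply: (@le_trans _ _ (\sum_(0 <= x < n) X * `|a x|)).
    rewrite big_nat_cond [X in _ <= X]big_nat_cond.
    apply: ler_sum => x /andP[/andP[_ xn] _]; apply: ler_wpM2r => //.
    by rewrite /X lerXn2r ?nnegrE ?ler0n // /nn ler_nat ltnW.
  by rewrite -mulr_sumr ler_wpM2l ?(le_trans _ X1) // Hb.
have bRA : `|\sum_(0 <= x < n) r x * a x| <= C2 + eps * (X * (M * nn)).
  have hz : forall x, (N2 <= x)%N -> `|r x * a x| <= eps * ((x%:R : R) ^+ nu * `|a x|).
    move=> x xN; rewrite normrM mulrA ler_wpM2r //.
    exact: HN2.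
  have hw : forall x, 0 <= (x%:R : R) ^+ nu * `|a x| by move=> x; rewrite mulr_ge0 // exprn_ge0.
  apply: (le_trans (@tail_bound _ (fun x => r x * a x) (fun x => (x%:R : R) ^+ nu * `|a x|) eps N2 n (ltW eps0) hw hz)).
  by rewrite lerD2l ler_wpM2l // ltW.
have hc := normr_ge0 c.
have hcq := normr_ge0 (c * q).
have Y0 : 1 <= nn * X by rewrite -[1]mulr1 ler_pM.
have key1 : `|c * q| * X + `|c| * C1 + C2 <= e / 2 * (nn * X).
  have h : `|c * q| * X + `|c| * C1 + C2 <= (`|c * q| + `|c| * C1 + C2) * X.
    by rewrite -addrA -[X in _ <= X * _]addrA aux_mulX // ?addr_ge0 // mulr_ge0.
  apply: (le_trans h).
  have hK : `|c * q| + `|c| * C1 + C2 = e / 2 * K.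
    by rewrite /K; field; rewrite gt_eqF.
  rewrite hK [Y in _ <= Y]mulrA; apply: ler_wpM2r; first exact: (le_trans ler01 X1).
  by apply: ler_wpM2l; [rewrite divr_ge0 // ltW|].
have key2 : eps * (2 * `|c| + M) * (nn * X) <= e / 2 * (nn * X).
  rewrite ler_wpM2r ?(le_trans _ Y0) // -epsD ler_wpM2l ?(ltW eps0) //.
  by rewrite /D lerDl.
have eq1 : `|c * X * T n| = `|c| * X * `|T n|.
  by rewrite !normrM (ger0_norm (le_trans _ X1)).
have eq2 : `|c * \sum_(0 <= j < n) Df j * T j.+1| = `|c| * `|\sum_(0 <= j < n) Df j * T j.+1|.
  by rewrite normrM.
have eq3 : `|c * q * (\sum_(0 <= x < n) (x%:R : R) ^+ nu - nn ^+ nu.+1 / nu.+1%:R)| =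
  `|c * q| * `|\sum_(0 <= x < n) (x%:R : R) ^+ nu - nn ^+ nu.+1 / nu.+1%:R|.
  by rewrite normrM.
set u1 := c * q * _ in eq3 *.
set u2 := c * X * T n in eq1 *.
set u3 := c * \sum_(0 <= j < n) _ in eq2 *.
set u4 := \sum_(0 <= x < n) r x * a x in bRA *.
have t1 : `|u1| <= `|c * q| * X by rewrite eq3; apply: ler_wpM2l.
have t2 : `|u2| <= `|c| * (eps * (nn * X)).
  rewrite eq1 (_ : `|c| * (eps * (nn * X)) = `|c| * X * (eps * nn)); last by ring.
  by apply: ler_wpM2l => //; rewrite mulr_ge0 // (le_trans ler01 X1).
have t3 : `|u3| <= `|c| * (C1 + eps * (nn * X)) by rewrite eq2; apply: ler_wpM2l.
have tri : `|u1 + u2 - u3 + u4| <= `|u1| + `|u2| + `|u3| + `|u4|.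
  apply: (le_trans (ler_normD _ _)); rewrite lerD2r;
     apply: (le_trans (ler_normB _ _)); rewrite lerD2r; exact: ler_normD.
rewrite exprS -/nn -/X.
have -> : e * (nn * X) = e / 2 * (nn * X) + e / 2 * (nn * X) by field.
apply: (le_trans tri).
apply: (aux_comb t1 t2 t3 bRA key1 key2); ring.
Qed.


Lemma near_nat_ex {P : nat -> Prop} : (\forall n \near \oo, P n) -> exists N, forall n, (N <= n)%N -> P n.
Proof. by move=> [N _ HN]; exists N => n; apply: HN. Qed.

Lemma esup_bound {R : realType} (v : nat -> R) :
  (limn_esup (fun n => (v n)%:E) < +oo)%E -> exists N (M : R), forall n, (N <= n)%N -> v n <= M.
Proof.
set u := fun n => (v n)%:E.
rewrite limn_esup_lim.
have -> : limn (esups u) = ereal_inf (range (esups u)).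
  by apply/cvg_lim => //; exact: cvg_esups_inf.
move=> /ereal_inf_lt [y [N _ <-] HN].
have ub : forall m, (N <= m)%N -> (u m <= esups u N)%E.
  by move=> m Nm; apply: ereal_sup_ubound; exists m.
move: HN ub; case: (esups u N) => [r| |] //= _ ub.
  by exists N, r => m /ub; rewrite lee_fin.
by have := ub N (leqnn N).
Qed.


Lemma conv_avg {R : realType} (u : nat -> R) (l : R) :
  (fun n : nat => (n%:R)^-1 * \sum_(0 <= k < n.+1) u k) @ \oo --> l ->
  smallo (fun n => \sum_(0 <= k < n) u k - l * n%:R) 1.
Proof.
move=> /cvgrPdist_le H e e0.
have e20 : 0 < e / 2 by rewrite divr_gt0.
have [N HN] := near_nat_ex (H _ e20).
have l0 : 0 <= 2 * `|l| / e by rewrite divr_ge0 ?mulr_ge0 // ltW.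
exists (maxn N.+2 (Num.Def.archi_bound (2 * `|l| / e)).+1) => m.
rewrite geq_max => /andP[Nm Km].
case: m Nm Km => [//|n] /= Nn Kn.
have n0 : (0 < n)%N by apply: leq_trans (ltn0Sn N) _.
have {}Nn : (N <= n)%N by apply: ltnW.
have hn := HN n Nn.
have nr0 : 0 < (n%:R : R) by rewrite ltr0n.
have lb : `|l| <= e / 2 * n.+1%:R.
  have : 2 * `|l| / e < n.+1%:R.
    apply: (lt_le_trans (archi_boundP l0)); rewrite ler_nat; exact: ltnW.
  rewrite ltr_pdivrMr // => h.
  move: h; clear; move=> h; lra.
set S := \sum_(0 <= k < n.+1) u k in hn *.
have h1 : `|S - l * n%:R| <= e / 2 * n%:R.
  have -> : S - l * n%:R = - (n%:R * (l - n%:R^-1 * S)).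
    by rewrite mulrBr mulrA mulfV ?gt_eqF // mul1r opprB mulrC.
  rewrite normrN normrM (ger0_norm (ltW nr0)) [Y in _ <= Y]mulrC.
  by apply: ler_wpM2l => //; apply: ltW.
rewrite expr1.
have -> : S - l * n.+1%:R = (S - l * n%:R) - l by rewrite -natr1; ring.
apply: (le_trans (ler_normB _ _)).
have : e / 2 * n%:R <= e / 2 * n.+1%:R.
  by apply: ler_wpM2l; [exact: ltW e20 | rewrite ler_nat].
move=> h3.
have -> : e * n.+1%:R = e / 2 * n.+1%:R + e / 2 * n.+1%:R by field.
apply: lerD => //; exact: le_trans h1 h3.
Qed.

Lemma abs_le_eucl {R : realType} (d : nat) (x : 'rV[R]_d) (i : 'I_d) :
  `|x ord0 i| <= eucl_norm x.
Proof.
rewrite /eucl_norm -sqrtr_sqr ler_wsqrtr //.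
by rewrite (bigD1 i) //= lerDl sumr_ge0 // => j _; rewrite sqr_ge0.
Qed.

Lemma main_induction {R : archiRealFieldType} (g : nat -> nat -> R) (q : nat -> R)
  (M : R) (N0 : nat) :
  (forall j, smallo (fun n => \sum_(0 <= k < n) g j k - q j * n%:R) 1) ->
  (forall j n, (N0 <= n)%N -> \sum_(0 <= k < n) `|g j k| <= M * n%:R) ->
  forall nu, smallo (fun n => Bsum g nu n -
     (nu`!%:R)^-1 * (\prod_(j < nu) q j) * n%:R ^+ nu) nu.
Proof.
move=> Ha Hb; elim => [|nu IH].
  move=> e e0; exists 0%N => n _ /=.
  by rewrite big_ord0 fact0 invr1 !mulr1 subrr normr0 ltW.
move=> e e0.
have [N HN] := @step_lemma _ (g nu) (Bsum g nu) (q nu) _ M nu N0 (Ha nu) (Hb nu) IH e e0.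
exists N => n /HN /=.
have -> : (nu`!%:R)^-1 * (\prod_(j < nu) q j) * q nu / nu.+1%:R =
    (nu.+1`!%:R)^-1 * (\prod_(j < nu.+1) q j).
  rewrite big_ord_recr /= factS natrM invfM.
  field.
  rewrite pnatr_eq0 -lt0n fact_gt0 /=; have -> : (1 + nu%:R : R) = nu.+1%:R by rewrite -natr1 addrC.
  by rewrite pnatr_eq0.
by [].
Qed.

Theorem theorem2p1 (R : realType) (d : nat) (xi : nat -> 'rV[R]_d) (Q : 'rV[R]_d) :
  (limn_esup (fun n : nat => ((n%:R)^-1 * \sum_(0 <= k < n.+1) eucl_norm (xi k))%:E)
     < +oo)%E ->
  (forall i : 'I_d,
     (fun n : nat => (n%:R)^-1 * \sum_(0 <= k < n.+1) xi k ord0 i) @ \oo --> Q ord0 i) ->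
  forall (nu : nat) (s : nu.-tuple 'I_d), (1 <= nu)%N ->
    (fun n : nat => (n%:R ^+ nu)^-1 * iter_sum xi s n) @ \oo -->
      (nu`!%:R)^-1 * \prod_(j < nu) Q ord0 (tnth s j).
Proof.
move=> H1 H2 nu s nu1.
have x0 : 'I_d := tnth s (Ordinal nu1).
set g : nat -> nat -> R := fun j k => xi k ord0 (nth x0 s j).
set q : nat -> R := fun j => Q ord0 (nth x0 s j).
have [N1 [M HM]] := esup_bound _ H1.
have Hb : forall j n, (maxn N1 1 <= n)%N -> \sum_(0 <= k < n) `|g j k| <= M * n%:R.
  move=> j n; rewrite geq_max => /andP[Nn n1].
  have hn := HM n Nn.
  have nr0 : 0 < (n%:R : R) by rewrite ltr0n.
  apply: (@le_trans _ _ (\sum_(0 <= k < n.+1) `|g j k|)).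
    by rewrite big_nat_recr //= lerDl.
  apply: (@le_trans _ _ (\sum_(0 <= k < n.+1) eucl_norm (xi k))).
    by apply: ler_sum => k _; exact: abs_le_eucl.
  by move: hn; rewrite mulrC ler_pdivrMr // mulrC.
have Ha : forall j, smallo (fun n => \sum_(0 <= k < n) g j k - q j * n%:R) 1.
  by move=> j; apply: conv_avg; exact: H2.
have Hm := @main_induction _ g q M (maxn N1 1) Ha Hb nu.
have Eit : forall n, iter_sum xi s n = Bsum g nu n.
  move=> n; rewrite -(comb_Bsum g nu n n (leqnn n)) /iter_sum.
  apply: eq_big => t.
    suff -> : all (fun k => (k < n)%N) (map val t) by rewrite andbT.
    by rewrite all_map; apply/allP => k _ /=.
  by move=> _; apply: eq_bigr => j _; rewrite /g (tnth_nth x0).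
have Eq : \prod_(j < nu) Q ord0 (tnth s j) = \prod_(j < nu) q j.
  by apply: eq_bigr => j _; rewrite /q (tnth_nth x0).
rewrite Eq.
apply/cvgrPdist_le => e e0.
have [N HN] := Hm e e0.
apply: filterS (nbhs_infty_ge (maxn N 1)) => n.
rewrite geq_max => /andP[Nn n1].
have := HN n Nn; rewrite Eit.
have X0 : 0 < (n%:R : R) ^+ nu by rewrite exprn_gt0 // ltr0n.
set B := Bsum g nu n.
set C := (nu`!%:R)^-1 * \prod_(j < nu) q j.
set X := (n%:R : R) ^+ nu in X0 *.
have -> : C - X^-1 * B = - (X^-1 * (B - C * X)).
  by field; rewrite gt_eqF.
rewrite normrN normrM ger0_norm ?invr_ge0 ?(ltW X0) // => h.
rewrite -(ler_pM2l X0) mulrA mulfV ?gt_eqF // mul1r mulrC.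
by rewrite [X * C]mulrC [X * e]mulrC.
Qed.
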